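(* Let $b$ and $n\ge 2$ be positive integers and let $h(x)=h_{n-2}x^{n-2}+\cdots+h_1x+h_0$ be a polynomial with complex coefficients of degree at most $n-2$. Define the numbers $h_i'$ ($i\ge 0$) by \[ \Phi_b\left(\frac{h(x)}{(1-x)^n}\right)=\frac{\sum_{i\ge 0}h_i' x^i}{(1-x)^n}. \] Then for every $i\ge 0$, \[ h_i' = b^{n-1}\sum_{j=0}^{n-2} K_b(j,i)\,h_j, \] where $K_b$ is the transition matrix of the base $b$ carries chain for the addition of $n-1$ numbers.
   Context: Let $\mathcal{R}$ be the space of rational functions in $x$ with complex coefficients. Every $R\in\mathcal{R}$ has a Laurent expansion at $x=0$, $R(x)=\sum_{n\gg-\infty} a_n x^n$ (only finitely many nonzero coefficients with negative index). For a positive integer $b$, the map $\Phi_b:\mathcal{R}\to\mathcal{R}$ is defined by $\Phi_b(R(x))=\sum_{n\gg -\infty} a_{bn+(b-1)}x^n$. The base $b$ carries chain for the addition of $m$ numbers: when $m$ numbers are added in base $b$ with all digits chosen independently and uniformly from $\{0,1,\dots,b-1\}$, the successive carries (working from the right, starting from carry $0$) form a Markov chain; if the current carry is $c$ and the digits in the next column are $y_1,\dots,y_m$, the next carry is $\lfloor (c+y_1+\cdots+y_m)/b\rfloor$. Its transition matrix is \[ K_b(c,d)=\frac{1}{b^m}\,\#\{(y_1,\dots,y_m)\in\{0,\dots,b-1\}^m : \lfloor (c+y_1+\cdots+y_m)/b\rfloor = d\} \] for nonnegative integers $c,d$ (here $m=n-1$, and for carries $c\le n-2$ one has $K_b(c,d)=0$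 whenever $d\ge n-1$). *)

(* Defs.v *)
From mathcomp Require Import all_boot all_order all_algebra all_field.
Set Implicit Arguments. Unset Strict Implicit. Unset Printing Implicit Defensive.
Import GRing.Theory Num.Theory.
Local Open Scope ring_scope.

(* Formal power series in x (coefficients indexed by nat) over algC (complex
   algebraic numbers, our model of C). *)

Definition pmulser (p : {poly algC}) (A : nat -> algC) : nat -> algC :=
  fun k => \sum_(i < k.+1) p`_i * A (k - i)%N.

Definition Phi (b : nat) (A : nat -> algC) : nat -> algC :=
  fun m => A (b * m + (b - 1))%N.

Definition carryK (b m c d : nat) : algC :=
  (#|[set y : {ffun 'I_m -> 'I_b} | ((c + \sum_(i < m) (y i : nat)) %/ b == d)%N]|)%:R
  / (b ^ m)%:R.

(* Main.v *)
Require Import Defs.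
From mathcomp Require Import all_boot all_order all_algebra all_field.
From mathcomp Require Import zify ring.
Import GRing.Theory Num.Theory.
Local Open Scope ring_scope.

Lemma comp_1X (b n : nat) :
  (1 - 'X : {poly algC}) ^+ n \Po 'X^b = (1 - 'X^b) ^+ n.
Proof.
elim: n => [|n IH]; first by rewrite !expr0 comp_polyC.
by rewrite !exprS comp_polyM IH comp_polyB comp_polyX -polyC1 comp_polyC.
Qed.

Lemma one_sub_X (b : nat) :
  (1 - 'X : {poly algC}) * \sum_(t < b) 'X^t = 1 - 'X^b.
Proof.
have := subrXX (1 : {poly algC}) 'X b; rewrite expr1n => ->; congr (_ * _).
by apply: eq_bigr => i _; rewrite expr1n mul1r.
Qed.

Lemma pmulser_trunc (p : {poly algC}) (A : nat -> algC) N m : (m < N)%N ->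
  pmulser p A m = (p * \poly_(d < N) A d)`_m.
Proof.
move=> mN; rewrite /pmulser coefM; apply: eq_bigr => i _.
rewrite coef_poly ifT //; apply: leq_ltn_trans mN; exact: leq_subr.
Qed.

Lemma claim1 (q u h : {poly algC}) (A : nat -> algC) :
  (forall k, pmulser q A k = h`_k) ->
  forall k, pmulser (q * u) A k = (h * u)`_k.
Proof.
move=> HA k; rewrite (pmulser_trunc _ _ _ _ (ltnSn k)) (mulrC q) -mulrA.
rewrite (mulrC h) !coefM; apply: eq_bigr => i _; congr (_ * _).
rewrite -pmulser_trunc ?HA //; rewrite ltnS; exact: leq_subr.
Qed.

Lemma sum_mul_split (F : nat -> algC) b M :
  \sum_(d < b * M) F d = \sum_(t < M) \sum_(r < b) F (b * t + r)%N.
Proof.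
elim: M => [|M IH]; first by rewrite muln0 !big_ord0.
rewrite big_ord_recr /= -IH mulnS addnC big_split_ord /=.
done.
Qed.

Lemma claim3 (q : {poly algC}) (A : nat -> algC) b i0 : (0 < b)%N ->
  pmulser (q \Po 'X^b) A (b * i0 + (b - 1))%N = pmulser q (Phi b A) i0.
Proof.
move=> b0; rewrite /pmulser.
have -> : (b * i0 + (b - 1)).+1 = (b * i0.+1)%N by rewrite mulnS; lia.
rewrite (sum_mul_split (fun d => (q \Po 'X^b)`_d * A (b * i0 + (b - 1) - d)%N)); apply: eq_bigr => t _.
case: b b0 => [//|b] b0.
rewrite big_ord_recl big1 ?addr0.
  rewrite coef_comp_poly_Xn // addn0 dvdn_mulr // mulKn // /Phi; congr (_ * A _).
  have tle : (t <= i0)%N by rewrite -ltnS.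
  have : (b * t <= b * i0)%N by rewrite leq_mul2l tle orbT.
  rewrite mulnBr; lia.
move=> r _; rewrite coef_comp_poly_Xn // ifF ?mul0r //.
rewrite dvdn_addr ?dvdn_mulr //; apply: gtnNdvd => //.
Qed.

Lemma coef_um (b m e : nat) :
  ((\sum_(t < b) 'X^t : {poly algC}) ^+ m)`_e =
  \sum_(y : {ffun 'I_m -> 'I_b}) ((\sum_(i < m) (y i : nat))%N == e)%:R.
Proof.
have -> : (\sum_(t < b) 'X^t : {poly algC}) ^+ m = \prod_(i < m) \sum_(t < b) 'X^t.
  by rewrite prodr_const card_ord.
rewrite bigA_distr_bigA coef_sum; apply: eq_bigr => y _.
by rewrite -(big_morph _ (exprD 'X) (expr0 'X)) coefXn eq_sym.
Qed.

Lemma inner (b s j k : nat) :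
  \sum_(r < b) ((j + r + s)%N == k)%:R =
  ((j + s <= k) && (k - (j + s) < b))%N%:R :> algC.
Proof.
case: (leqP (j + s) k) => h /=.
  have E : forall r : 'I_b, ((j + r + s)%N == k) = ((r : nat) == k - (j + s))%N.
    by move=> r; apply/eqP/eqP; lia.
  rewrite (eq_bigr _ (fun r _ => congr1 (fun x : bool => x%:R) (E r))).
  case: (ltnP (k - (j + s)) b) => hb.
    rewrite (bigD1 (Ordinal hb)) //= eqxx big1 ?addr0 // => r /eqP rne.
    case: eqP => // re; case: rne; apply: val_inj => /=; exact: re.
  rewrite big1 // => r _; case: eqP => // re; case: r re => r /= rb; lia.
rewrite big1 // => r _; case: eqP => //; lia.
Qed.

Lemma divb (b i x : nat) : (0 < b)%N ->
  (x %/ b == i)%N = ((x <= b * i + (b - 1)) && (b * i + (b - 1) - x < b))%N.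
Proof.
move=> b0; rewrite eqn_leq -ltnS ltn_divLR // leq_divRL // mulSn (mulnC i b).
apply/idP/idP; case/andP => h1 h2; apply/andP; split; lia.
Qed.

Lemma coefG (b m j i : nat) : (0 < b)%N ->
  ('X^j * ((\sum_(t < b) 'X^t) * (\sum_(t < b) 'X^t : {poly algC}) ^+ m))`_(b * i + (b - 1))
  = (#|[set y : {ffun 'I_m -> 'I_b} | ((j + \sum_(i0 < m) (y i0 : nat)) %/ b == i)%N]|)%:R.
Proof.
move=> b0; set k := (b * i + (b - 1))%N.
rewrite -sumr_const [RHS]big_mkcond /=.
rewrite (eq_bigr (fun y : {ffun 'I_m -> 'I_b} =>
   \sum_(r < b) ((j + r + \sum_(i0 < m) (y i0 : nat))%N == k)%:R)); last first.
  move=> y _; rewrite inner in_set divb //.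
  by case: ifP.
rewrite exchange_big /= coefXnM.
case: (ltnP k j) => hk.
  by rewrite big1 // => r _; rewrite big1 // => y _; case: eqP => //; lia.
rewrite mulr_suml coef_sum; apply: eq_bigr => r _.
rewrite coefXnM coef_um.
case: (ltnP (k - j) r) => hr.
  by rewrite big1 // => y _; case: eqP => //; lia.
apply: eq_bigr => y _; congr (_%:R); clearbody k; move: (\sum_(i0 < m) _)%N => s; apply/eqP/eqP; lia.
Qed.

Theorem theorem2p1 (b n : nat) (h : {poly algC}) (A : nat -> algC) :
  (0 < b)%N -> (2 <= n)%N -> (size h <= n.-1)%N ->
  (forall k, pmulser ((1 - 'X) ^+ n) A k = h`_k) ->
  forall i : nat,
    pmulser ((1 - 'X) ^+ n) (Phi b A) i =
    (b ^ n.-1)%:R * \sum_(j < n.-1) carryK b n.-1 j i * h`_j.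
Proof.
move=> b0 n2 hs HA i.
set u := (\sum_(t < b) 'X^t : {poly algC}).
rewrite -claim3 // comp_1X -one_sub_X exprMn (claim1 _ _ h _ HA).
have hE : h = \sum_(j < n.-1) h`_j *: 'X^j.
  rewrite -poly_def; apply/polyP => k; rewrite coef_poly.
  case: ltnP => // hk; rewrite nth_default //; exact: leq_trans hs hk.
rewrite [in LHS]hE mulr_suml coef_sum mulr_sumr; apply: eq_bigr => j _.
have -> : u ^+ n = u * u ^+ n.-1 by rewrite -exprS; congr (_ ^+ _); lia.
rewrite -scalerAl coefZ /u coefG // /carryK.
have bn0 : ((b ^ n.-1)%:R : algC) != 0 by rewrite pnatr_eq0 -lt0n expn_gt0 b0.
by rewrite mulrA mulrCA mulfV // mulr1 mulrC.
Qed.
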